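(* Let $(\hat\xi,\hat\tau)$ be a maximizer of $\mathrm E_n[\log\{1+\mathcal F(\xi+q(\cdot;\tau))\}]$ over $\xi\in\mathbb R$, $\tau\in\Theta_\tau$ (restricted to parameters for which $1+\mathcal F(\xi+q(\cdot;\tau))(x^{(i)},a^{(i)})>0$ for all $i$), assumed to exist, and define $$\hat c=\mathrm E_n\Big[\frac{1}{1+\mathcal F(\hat\xi+q(\cdot;\hat\tau))}\Big],\qquad \hat\beta_{\mathrm{emp}}=\mathrm E_n\Big[\frac{\hat c^{-1}\,w\,r}{1+\mathcal F(\hat\xi+q(\cdot;\hat\tau))}\Big].$$ Then (1-boundedness) $0\le\hat\beta_{\mathrm{emp}}\le R_{\max}$; and (stability) if, conditionally on $\mathcal D_{x,a}=\{(x^{(i)},a^{(i)})\}_{i=1}^n$, the rewards $r^{(1)},\dots,r^{(n)}$ are independent with $\mathrm{var}(r^{(i)}\mid\mathcal D_{x,a})\le\sigma^2$ for all $i$, then $\mathrm{var}(\hat\beta_{\mathrm{emp}}\mid\mathcal D_{x,a})\le\sigma^2$.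
   Context: Contextual bandit setting. $\mathcal A$ is a finite action set. The data are $n$ i.i.d. triples $(x^{(i)},a^{(i)},r^{(i)})$, each distributed as $(x,a,r)$ where $x\sim P_0$, $a\mid x\sim\pi_b(\cdot\mid x)$ and $r\mid(x,a)\sim P_r(x,a)$ with $r\in[0,R_{\max}]$. $\pi_e$ is the evaluation policy, overlap holds, and $w=w(x,a)=\pi_e(a|x)/\pi_b(a|x)$ is bounded. $\mathrm E_n[f]=n^{-1}\sum_{i=1}^n f(x^{(i)},a^{(i)},r^{(i)})$. For $m:\mathcal X\times\mathcal A\to\mathbb R$, $\mathcal F(m)(x,a)=w(x,a)m(x,a)-\sum_{a'\in\mathcal A}m(x,a')\pi_e(a'|x)$; note $\mathcal F(\xi+q)=\xi(w-1)+\mathcal F(q)$ for a constant $\xi$. A Q-function model $q(x,a;\tau)$, $\tau\in\Theta_\tau$, with $|q|\le R_{\max}$. *)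

(* Defs.v *)
From Stdlib Require Export Reals List.
Export ListNotations.
Open Scope R_scope.

(** Finite sums / products over indices 0..n-1 (data points i = 1..n shifted to 0..n-1). *)
Fixpoint Rsum (n : nat) (f : nat -> R) : R :=
  match n with O => 0 | S k => Rsum k f + f k end.
Fixpoint Rprod (n : nat) (f : nat -> R) : R :=
  match n with O => 1 | S k => Rprod k f * f k end.

Definition lsum {A : Type} (l : list A) (f : A -> R) : R :=
  fold_right (fun a s => f a + s) 0 l.

Definition En (n : nat) (f : nat -> R) : R := Rsum n f / INR n.

(** Importance weight w(x,a) = pi_e(a|x)/pi_b(a|x); policies written pi x a = pi(a|x). *)
Definition wgt {X A : Type} (pe pb : X -> A -> R) (x : X) (a : A) : R :=
  pe x a / pb x a.

Definition Fop {X A : Type} (acts : list A) (pe pb : X -> A -> R)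
  (m : X -> A -> R) (x : X) (a : A) : R :=
  wgt pe pb x a * m x a - lsum acts (fun a' => m x a' * pe x a').

Definition shiftq {X A Th : Type} (q : X -> A -> Th -> R) (xi : R) (tau : Th) : X -> A -> R :=
  fun x a => xi + q x a tau.

Definition denom {X A Th : Type} (acts : list A) (pe pb : X -> A -> R)
  (q : X -> A -> Th -> R) (xs : nat -> X) (as_ : nat -> A) (xi : R) (tau : Th) (i : nat) : R :=
  1 + Fop acts pe pb (shiftq q xi tau) (xs i) (as_ i).

Definition objective {X A Th : Type} (acts : list A) (pe pb : X -> A -> R)
  (q : X -> A -> Th -> R) (n : nat) (xs : nat -> X) (as_ : nat -> A) (xi : R) (tau : Th) : R :=
  En n (fun i => ln (denom acts pe pb q xs as_ xi tau i)).

Definition feasible {X A Th : Type} (acts : list A) (pe pb : X -> A -> R)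
  (q : X -> A -> Th -> R) (Theta : Th -> Prop) (n : nat) (xs : nat -> X) (as_ : nat -> A)
  (xi : R) (tau : Th) : Prop :=
  Theta tau /\ forall i, (i < n)%nat -> 0 < denom acts pe pb q xs as_ xi tau i.

Definition c_hat {X A Th : Type} (acts : list A) (pe pb : X -> A -> R)
  (q : X -> A -> Th -> R) (n : nat) (xs : nat -> X) (as_ : nat -> A) (xi : R) (tau : Th) : R :=
  En n (fun i => 1 / denom acts pe pb q xs as_ xi tau i).

Definition beta_emp {X A Th : Type} (acts : list A) (pe pb : X -> A -> R)
  (q : X -> A -> Th -> R) (n : nat) (xs : nat -> X) (as_ : nat -> A) (xi : R) (tau : Th)
  (r : nat -> R) : R :=
  En n (fun i => / c_hat acts pe pb q n xs as_ xi tau * wgt pe pb (xs i) (as_ i) * r i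
                 / denom acts pe pb q xs as_ xi tau i).

(** Abstract (conditional) probability model: an expectation functional on
    bounded random variables over a sample space Omega. *)
Definition bounded_rv {Omega : Type} (f : Omega -> R) : Prop :=
  exists M, forall w, Rabs (f w) <= M.

Definition is_expectation {Omega : Type} (E : (Omega -> R) -> R) : Prop :=
  (forall f g, bounded_rv f -> bounded_rv g -> E (fun w => f w + g w) = E f + E g) /\
  (forall c f, bounded_rv f -> E (fun w => c * f w) = c * E f) /\
  (forall f g, bounded_rv f -> bounded_rv g -> (forall w, f w <= g w) -> E f <= E g) /\
  E (fun _ => 1) = 1.

Definition Var {Omega : Type} (E : (Omega -> R) -> R) (f : Omega -> R) : R :=
  E (fun w => (f w - E f) ^ 2).

Definition mutually_independent {Omega : Type} (E : (Omega -> R) -> R) (n : nat)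
  (r : nat -> Omega -> R) : Prop :=
  forall g : nat -> R -> R, (forall i, continuity (g i)) ->
    E (fun w => Rprod n (fun i => g i (r i w))) = Rprod n (fun i => E (fun w => g i (r i w))).

(* Main.v *)
Require Import Defs.
From Stdlib Require Import Reals List Lra Lia FunctionalExtensionality Arith.
Open Scope R_scope.

Lemma Rsum_ext n f g : (forall i, (i < n)%nat -> f i = g i) -> Rsum n f = Rsum n g.
Proof. induction n; simpl; intros H; auto. rewrite IHn by (intros; apply H; lia). rewrite H by lia. auto. Qed.

Lemma Rsum_plus n f g : Rsum n (fun i => f i + g i) = Rsum n f + Rsum n g.
Proof. induction n; simpl; [ring|rewrite IHn; ring]. Qed.

Lemma Rsum_scal n c f : Rsum n (fun i => c * f i) = c * Rsum n f.
Proof. induction n; simpl; [ring|rewrite IHn; ring]. Qed.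

Lemma Rsum_le n f g : (forall i, (i < n)%nat -> f i <= g i) -> Rsum n f <= Rsum n g.
Proof. induction n; simpl; intros H; [lra|]. assert (f n <= g n) by (apply H; lia).
 assert (Rsum n f <= Rsum n g) by (apply IHn; intros; apply H; lia). lra. Qed.

Lemma Rsum_nonneg n f : (forall i, (i < n)%nat -> 0 <= f i) -> 0 <= Rsum n f.
Proof. intros H. replace 0 with (Rsum n (fun _ => 0)). apply Rsum_le; auto.
 clear H; induction n; simpl; auto; rewrite IHn; ring. Qed.

Lemma Rsum_pos n f : (1 <= n)%nat -> (forall i, (i < n)%nat -> 0 < f i) -> 0 < Rsum n f.
Proof. destruct n; [lia|]. intros _ H; simpl.
 assert (0 <= Rsum n f) by (apply Rsum_nonneg; intros; left; apply H; lia).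
 assert (0 < f n) by (apply H; lia). lra. Qed.

Lemma Rsum_term_le n f k : (k < n)%nat -> (forall i, (i < n)%nat -> 0 <= f i) -> f k <= Rsum n f.
Proof. induction n; intros Hk H; [lia|]. simpl.
 destruct (Nat.eq_dec k n).
 - subst. assert (0 <= Rsum n f) by (apply Rsum_nonneg; intros; apply H; lia). lra.
 - assert (f k <= Rsum n f) by (apply IHn; [lia| intros; apply H; lia]).
   assert (0 <= f n) by (apply H; lia). lra. Qed.

Lemma lsum_lin {B : Type} (l : list B) (x : R) (f g : B -> R) :
  lsum l (fun a => (x + f a) * g a) = x * lsum l g + lsum l (fun a => f a * g a).
Proof. induction l; unfold lsum in *; simpl; [ring|]. rewrite IHl. ring. Qed.

Lemma denom_lin {X A Th : Type} (acts : list A) (pe pb : X -> A -> R)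
  (Hpe : forall x, lsum acts (fun a => pe x a) = 1)
  (q : X -> A -> Th -> R) xs as_ xi tau i :
  denom acts pe pb q xs as_ xi tau i =
  denom acts pe pb q xs as_ 0 tau i + xi * (wgt pe pb (xs i) (as_ i) - 1).
Proof. unfold denom, Fop, shiftq.
 rewrite (lsum_lin acts xi (fun a => q (xs i) a tau) (fun a => pe (xs i) a)).
 rewrite (lsum_lin acts 0 (fun a => q (xs i) a tau) (fun a => pe (xs i) a)).
 rewrite Hpe. ring. Qed.

Lemma deriv_lin b a c : derivable_pt_lim (fun x => b + x * a) c a.
Proof.
 assert (H1 := derivable_pt_lim_mult id (fct_cte a) c 1 0 (derivable_pt_lim_id c) (derivable_pt_lim_const a c)).
 assert (H2 := derivable_pt_lim_plus _ _ c _ _ (derivable_pt_lim_const b c) H1).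
 unfold plus_fct, mult_fct, fct_cte, id in H2.
 replace (0 + (1 * a + c * 0)) with a in H2 by ring. exact H2.
Qed.

Lemma deriv_sumln n B a c : (forall i, (i < n)%nat -> 0 < B i + c * a i) ->
  derivable_pt_lim (fun x => Rsum n (fun i => ln (B i + x * a i))) c
    (Rsum n (fun i => a i / (B i + c * a i))).
Proof. induction n; intros H; simpl.
 - apply (derivable_pt_lim_const 0).
 - apply (derivable_pt_lim_plus (fun x => Rsum n (fun i => ln (B i + x * a i)))
      (fun x => ln (B n + x * a n))).
   + apply IHn; intros; apply H; lia.
   + replace (a n / (B n + c * a n)) with (/ (B n + c * a n) * a n) by (unfold Rdiv; ring).
     apply (derivable_pt_lim_comp (fun x => B n + x * a n) ln).
     * apply deriv_lin.
     * apply derivable_pt_lim_ln. apply H; lia.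
Qed.

Lemma small_delta n (d a : nat -> R) : (forall i, (i < n)%nat -> 0 < d i) ->
  exists delta, 0 < delta /\ forall i h, (i < n)%nat -> Rabs h < delta -> 0 < d i + h * a i.
Proof. induction n; intros H.
 - exists 1; split; [lra|intros; lia].
 - destruct IHn as [d0 [Hd0 Hd]]. intros; apply H; lia.
   assert (Hn : 0 < d n) by (apply H; lia).
   assert (Ha : 0 <= Rabs (a n)) by apply Rabs_pos.
   set (d1 := d n / (Rabs (a n) + 1)).
   assert (Hd1 : 0 < d1) by (unfold d1; apply Rdiv_lt_0_compat; lra).
   exists (Rmin d0 d1). split. apply Rmin_glb_lt; auto.
   intros i h Hi Hh. destruct (Nat.eq_dec i n).
   + subst i. assert (Rabs h < d1) by (eapply Rlt_le_trans; [apply Hh| apply Rmin_r]).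
     assert (Rabs h * Rabs (a n) <= d1 * Rabs (a n)) by (apply Rmult_le_compat_r; lra).
     assert (d1 * (Rabs (a n) + 1) = d n) by (unfold d1; field; lra).
     assert (- (h * a n) <= Rabs (h * a n)) by (rewrite <- Rabs_Ropp; apply Rle_abs).
     rewrite Rabs_mult in H3. nra.
   + apply Hd; [lia|]. eapply Rlt_le_trans; [apply Hh| apply Rmin_l].
Qed.

Section P.
Context {Omega : Type} (E : (Omega -> R) -> R) (HE : is_expectation E).

Lemma bnd_ext (f g : Omega -> R) : (forall w, f w = g w) -> bounded_rv f -> bounded_rv g.
Proof. intros H [M HM]; exists M; intros w; rewrite <- H; auto. Qed.
Lemma bnd_const c : bounded_rv (fun _ : Omega => c).
Proof. exists (Rabs c); intros; lra. Qed.
Lemma bnd_plus (f g : Omega -> R) : bounded_rv f -> bounded_rv g -> bounded_rv (fun w => f w + g w).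
Proof. intros [M1 H1] [M2 H2]; exists (M1 + M2); intros w.
 eapply Rle_trans; [apply Rabs_triang|]. specialize (H1 w); specialize (H2 w); lra. Qed.
Lemma bnd_mult (f g : Omega -> R) : bounded_rv f -> bounded_rv g -> bounded_rv (fun w => f w * g w).
Proof. intros [M1 H1] [M2 H2]; exists (M1 * M2); intros w. rewrite Rabs_mult.
 apply Rmult_le_compat; auto using Rabs_pos. Qed.
Lemma bnd_Rsum k (f : nat -> Omega -> R) : (forall i, (i < k)%nat -> bounded_rv (f i)) ->
  bounded_rv (fun w => Rsum k (fun i => f i w)).
Proof. induction k; intros H; simpl. apply bnd_const.
 apply (bnd_plus (fun w => Rsum k (fun i => f i w)) (f k)). apply IHk; intros; apply H; lia. apply H; lia. Qed.

Lemma E_ext (f g : Omega -> R) : (forall w, f w = g w) -> E f = E g.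
Proof. intros H. f_equal. apply functional_extensionality; auto. Qed.
Lemma E_plus (f g : Omega -> R) : bounded_rv f -> bounded_rv g -> E (fun w => f w + g w) = E f + E g.
Proof. destruct HE as [H _]; auto. Qed.
Lemma E_scal c (f : Omega -> R) : bounded_rv f -> E (fun w => c * f w) = c * E f.
Proof. destruct HE as [_ [H _]]; auto. Qed.
Lemma E_const c : E (fun _ => c) = c.
Proof. destruct HE as [_ [H [_ H1]]].
 rewrite (E_ext (fun _ => c) (fun _ => c * 1)) by (intros; ring).
 rewrite (H c (fun _ => 1)) by apply bnd_const. rewrite H1; ring. Qed.
Lemma E_mono (f g : Omega -> R) : bounded_rv f -> bounded_rv g -> (forall w, f w <= g w) -> E f <= E g.
Proof. destruct HE as [_ [_ [H _]]]; auto. Qed.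
Lemma E_Rsum k (f : nat -> Omega -> R) : (forall i, (i < k)%nat -> bounded_rv (f i)) ->
  E (fun w => Rsum k (fun i => f i w)) = Rsum k (fun i => E (f i)).
Proof. induction k; intros H; simpl. apply E_const.
 rewrite (E_plus (fun w => Rsum k (fun i => f i w)) (f k)).
 rewrite IHk; auto; intros; apply H; lia.
 apply bnd_Rsum; intros; apply H; lia. apply H; lia. Qed.

Lemma Rprod_ones n h : (forall k, (k < n)%nat -> h k = 1) -> Rprod n h = 1.
Proof. induction n; simpl; intros H; auto. rewrite IHn, H by (try intros; lia || (apply H; lia)). ring.
Qed.
Lemma Rprod_single n h i : (i < n)%nat -> (forall k, (k < n)%nat -> k <> i -> h k = 1) -> Rprod n h = h i.
Proof. induction n; simpl; intros Hi H; [lia|]. destruct (Nat.eq_dec i n).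
 - subst. rewrite Rprod_ones. ring. intros; apply H; lia.
 - rewrite IHn, (H n) by (try lia; intros; apply H; lia). ring. Qed.
Lemma Rprod_two n h i j : (i < j)%nat -> (j < n)%nat ->
  (forall k, (k < n)%nat -> k <> i -> k <> j -> h k = 1) -> Rprod n h = h i * h j.
Proof. induction n; simpl; intros Hij Hj H; [lia|]. destruct (Nat.eq_dec j n).
 - subst. rewrite (Rprod_single _ _ i). ring. lia. intros; apply H; lia.
 - rewrite IHn, (H n) by (try lia; intros; apply H; lia). ring. Qed.

Variable n : nat.
Variable r : nat -> Omega -> R.
Variable Rmax : R.
Hypothesis Hr : forall i w, (i < n)%nat -> 0 <= r i w <= Rmax.
Hypothesis Hind : mutually_independent E n r.

Lemma bnd_r i : (i < n)%nat -> bounded_rv (r i).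
Proof. intros Hi. exists (Rabs Rmax). intros w. destruct (Hr i w Hi).
 rewrite Rabs_right by lra. rewrite Rabs_right by lra. lra. Qed.

Let m i := E (r i).

Lemma bnd_c i : (i < n)%nat -> bounded_rv (fun w => r i w - m i).
Proof. intros; apply bnd_plus. apply bnd_r; auto. apply bnd_const. Qed.

Lemma E_c i : (i < n)%nat -> E (fun w => r i w - m i) = 0.
Proof. intros Hi. unfold Rminus. rewrite (E_plus (r i) (fun _ => - m i)).
 rewrite E_const. unfold m; ring. apply bnd_r; auto. apply bnd_const. Qed.

Lemma cross_lt i j : (i < j)%nat -> (j < n)%nat ->
  E (fun w => (r i w - m i) * (r j w - m j)) = 0.
Proof. intros Hij Hj.
 set (g := fun k => if k =? i then (fun x => x - m i) else if k =? j then (fun x => x - m j) else (fun _ : R => 1)).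
 assert (Hc : forall k, continuity (g k)).
 { intros k; unfold g. assert (forall c, continuity (fun x => x - c)).
   { intros c. apply (continuity_minus id (fct_cte c)). apply derivable_continuous, derivable_id.
     apply derivable_continuous, derivable_const. }
   destruct (k =? i); auto. destruct (k =? j); auto. apply continuity_const. intros x y; auto. }
 assert (Hgi : g i = fun x => x - m i) by (unfold g; rewrite Nat.eqb_refl; auto).
 assert (Hgj : g j = fun x => x - m j).
 { unfold g. rewrite (proj2 (Nat.eqb_neq j i)) by lia. rewrite Nat.eqb_refl; auto. }
 assert (Hgk : forall k, k <> i -> k <> j -> g k = fun _ => 1).
 { intros k H1 H2; unfold g. rewrite (proj2 (Nat.eqb_neq k i)) by lia.
   rewrite (proj2 (Nat.eqb_neq k j)) by lia. auto. }
 specialize (Hind g Hc).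
 rewrite (E_ext _ (fun w => Rprod n (fun k => g k (r k w)))).
 rewrite Hind. rewrite (Rprod_two _ _ i j); auto. rewrite Hgi, E_c by lia. ring.
 intros k Hk H1 H2. rewrite Hgk by auto. apply E_const.
 intros w. rewrite (Rprod_two _ _ i j); auto. rewrite Hgi, Hgj. auto.
 intros k Hk H1 H2. rewrite Hgk by auto. auto.
Qed.

Variable p : nat -> R.
Let S k w := Rsum k (fun i => p i * (r i w - m i)).

Lemma bnd_S k : (k <= n)%nat -> bounded_rv (S k).
Proof. intros Hk. unfold S. apply (bnd_Rsum k (fun i w => p i * (r i w - m i))).
 intros i Hi. apply bnd_mult. apply bnd_const. apply bnd_c; lia. Qed.

Lemma E_S_cross k : (k < n)%nat -> E (fun w => S k w * (r k w - m k)) = 0.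
Proof. intros Hk. unfold S.
 rewrite (E_ext _ (fun w => Rsum k (fun i => p i * ((r i w - m i) * (r k w - m k))))).
 rewrite E_Rsum. rewrite (Rsum_ext _ _ (fun _ => 0)).
 clear; induction k; simpl; auto; rewrite IHk; ring.
 intros i Hi. rewrite E_scal. rewrite cross_lt; auto; ring. apply bnd_mult; apply bnd_c; lia.
 intros i Hi. apply bnd_mult. apply bnd_const. apply bnd_mult; apply bnd_c; lia.
 intros w. rewrite Rmult_comm, <- Rsum_scal. apply Rsum_ext. intros; ring.
Qed.

Lemma E_S2 k : (k <= n)%nat ->
  E (fun w => S k w ^ 2) = Rsum k (fun i => p i ^ 2 * Var E (r i)).
Proof. induction k; intros Hk.
 - simpl. rewrite <- (E_const 0). apply E_ext. intros; unfold S; simpl; ring.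
 - simpl. rewrite (E_ext _ (fun w => (S k w ^ 2 + 2 * p k * (S k w * (r k w - m k))) + p k ^ 2 * (r k w - m k) ^ 2)).
   assert (B1 : bounded_rv (fun w => S k w ^ 2)).
   { apply (bnd_ext (fun w => S k w * (S k w * 1))). intros; ring.
     apply bnd_mult. apply bnd_S; lia. apply bnd_mult. apply bnd_S; lia. apply bnd_const. }
   assert (B2 : bounded_rv (fun w => S k w * (r k w - m k))).
   { apply bnd_mult. apply bnd_S; lia. apply bnd_c; lia. }
   assert (B3 : bounded_rv (fun w => (r k w - m k) ^ 2)).
   { apply (bnd_ext (fun w => (r k w - m k) * ((r k w - m k) * 1))). intros; ring.
     apply bnd_mult. apply bnd_c; lia. apply bnd_mult. apply bnd_c; lia. apply bnd_const. }
   rewrite (E_plus (fun w => S k w ^ 2 + 2 * p k * (S k w * (r k w - m k))) (fun w => p k ^ 2 * (r k w - m k) ^ 2)).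
   rewrite (E_plus (fun w => S k w ^ 2) (fun w => 2 * p k * (S k w * (r k w - m k)))); auto.
   rewrite (E_scal (2 * p k)), (E_scal (p k ^ 2)); auto.
   rewrite E_S_cross, IHk by lia.
   change (E (fun w => (r k w - m k) ^ 2)) with (Var E (r k)). rewrite (Rsum_ext k (fun i => p i * (p i * 1) * Var E (r i)) (fun i => p i ^2 * Var E (r i))) by (intros; ring). ring.
   apply (bnd_mult (fun _ => 2 * p k)); auto; apply bnd_const.
   apply bnd_plus; auto. apply (bnd_mult (fun _ => 2 * p k)); auto; apply bnd_const.
   apply (bnd_mult (fun _ => p k ^ 2)); auto; apply bnd_const.
   intros w. unfold S; simpl. ring.
Qed.

Lemma var_nonneg i : (i < n)%nat -> 0 <= Var E (r i).
Proof. intros Hi. unfold Var. rewrite <- (E_const 0). apply E_mono. apply bnd_const.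
 apply (bnd_ext (fun w => (r i w - E (r i)) * ((r i w - E (r i)) * 1))). intros; ring.
 apply bnd_mult. apply bnd_c; auto. apply bnd_mult. apply bnd_c; auto. apply bnd_const.
 intros w. apply pow2_ge_0. Qed.

Lemma var_bound sigma2 : (1 <= n)%nat -> (forall i, (i < n)%nat -> Var E (r i) <= sigma2) ->
  (forall i, (i < n)%nat -> 0 <= p i) -> Rsum n p = 1 ->
  Var E (fun w => Rsum n (fun i => p i * r i w)) <= sigma2.
Proof. intros Hn Hv Hp Hs.
 assert (Hs2 : 0 <= sigma2). { apply Rle_trans with (Var E (r 0)). apply var_nonneg; lia. apply Hv; lia. }
 assert (Eb : E (fun w => Rsum n (fun i => p i * r i w)) = Rsum n (fun i => p i * m i)).
 { rewrite (E_Rsum n (fun i w => p i * r i w)). apply Rsum_ext. intros i Hi.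
   rewrite E_scal. auto. apply bnd_r; auto.
   intros i Hi. apply bnd_mult. apply bnd_const. apply bnd_r; auto. }
 unfold Var. rewrite Eb.
 rewrite (E_ext _ (fun w => S n w ^ 2)).
 rewrite E_S2 by lia.
 apply Rle_trans with (Rsum n (fun i => sigma2 * p i)).
 apply Rsum_le. intros i Hi. assert (Hpi : p i <= 1) by (rewrite <- Hs; apply Rsum_term_le; auto).
 specialize (Hv i Hi). specialize (Hp i Hi). assert (0 <= Var E (r i)) by (apply var_nonneg; auto).
 assert (p i ^ 2 <= p i) by nra.
 apply Rle_trans with (p i ^ 2 * sigma2). apply Rmult_le_compat_l; nra. nra.
 rewrite Rsum_scal, Hs. lra.
 intros w. unfold S. rewrite (Rsum_ext n (fun i => p i * (r i w - m i)) (fun i => p i * r i w + (-1) * (p i * m i))) by (intros; ring).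
 rewrite Rsum_plus, Rsum_scal. ring.
Qed.
End P.

Theorem lemma1
  (X A Th : Type) (acts : list A)
  (Hacts : NoDup acts /\ forall a : A, In a acts)
  (pe pb : X -> A -> R)
  (Hpe : forall x, (forall a, 0 <= pe x a) /\ lsum acts (fun a => pe x a) = 1)
  (Hpb : forall x, (forall a, 0 <= pb x a) /\ lsum acts (fun a => pb x a) = 1)
  (Hoverlap : forall x a, 0 < pe x a -> 0 < pb x a)
  (Hwbdd : exists C, forall x a, 0 < pb x a -> wgt pe pb x a <= C)
  (Rmax : R) (Theta : Th -> Prop) (q : X -> A -> Th -> R)
  (Hq : forall x a tau, Rabs (q x a tau) <= Rmax)
  (n : nat) (Hn : (1 <= n)%nat) (xs : nat -> X) (as_ : nat -> A)
  (Hsupp : forall i, (i < n)%nat -> 0 < pb (xs i) (as_ i))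
  (xi_hat : R) (tau_hat : Th)
  (Hfeas : feasible acts pe pb q Theta n xs as_ xi_hat tau_hat)
  (Hmax : forall xi tau, feasible acts pe pb q Theta n xs as_ xi tau ->
            objective acts pe pb q n xs as_ xi tau
            <= objective acts pe pb q n xs as_ xi_hat tau_hat) :
  (* 1-boundedness *)
  (forall r : nat -> R, (forall i, (i < n)%nat -> 0 <= r i <= Rmax) ->
     0 <= beta_emp acts pe pb q n xs as_ xi_hat tau_hat r <= Rmax) /\
  (* stability, conditionally on D_{x,a} (fixed above) *)
  (forall (Omega : Type) (E : (Omega -> R) -> R) (r : nat -> Omega -> R) (sigma2 : R),
     is_expectation E ->
     (forall i w, (i < n)%nat -> 0 <= r i w <= Rmax) ->
     mutually_independent E n r ->
     (forall i, (i < n)%nat -> Var E (r i) <= sigma2) ->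
     Var E (fun w => beta_emp acts pe pb q n xs as_ xi_hat tau_hat (fun i => r i w))
       <= sigma2).
Proof.
  destruct Hfeas as [HTh Hd0].
  set (w := fun i => wgt pe pb (xs i) (as_ i)).
  set (B := fun i => denom acts pe pb q xs as_ 0 tau_hat i).
  set (a := fun i => w i - 1).
  set (d := fun i => B i + xi_hat * a i).
  assert (Hlin : forall xi i, denom acts pe pb q xs as_ xi tau_hat i = B i + xi * a i).
  { intros xi i. unfold B, a, w. apply denom_lin. intros x; apply Hpe. }
  assert (Hd : forall i, (i < n)%nat -> 0 < d i).
  { intros i Hi. unfold d. rewrite <- Hlin. apply Hd0; auto. }
  assert (Hnpos : 0 < INR n) by (apply lt_0_INR; lia).
  (* first-order condition *)
  assert (Hfoc : Rsum n (fun i => a i / d i) = 0).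
  { destruct (small_delta n d a Hd) as [delta [Hdel Hdel2]].
    set (f := fun x => Rsum n (fun i => ln (B i + x * a i))).
    assert (Hder : derivable_pt_lim f xi_hat (Rsum n (fun i => a i / (B i + xi_hat * a i)))).
    { apply deriv_sumln. intros i Hi. apply (Hd i Hi). }
    assert (Hobj : forall x, objective acts pe pb q n xs as_ x tau_hat = f x / INR n).
    { intros x. unfold objective, En, f. f_equal. apply Rsum_ext. intros i _. rewrite Hlin. auto. }
    assert (Hm := deriv_maximum f (xi_hat - delta) (xi_hat + delta) xi_hat (exist _ _ Hder)).
    simpl in Hm. apply Hm; try lra.
    intros x H1 H2.
    assert (Hf : feasible acts pe pb q Theta n xs as_ x tau_hat).
    { split; auto. intros i Hi. rewrite Hlin.
      replace (B i + x * a i) with (d i + (x - xi_hat) * a i) by (unfold d; ring).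
      apply Hdel2; auto. apply Rabs_def1; lra. }
    specialize (Hmax x tau_hat Hf). rewrite !Hobj in Hmax.
    apply (Rmult_le_reg_r (/ INR n)). apply Rinv_0_lt_compat; auto. exact Hmax. }
  assert (Hw : Rsum n (fun i => w i / d i) = Rsum n (fun i => 1 / d i)).
  { assert (Rsum n (fun i => a i / d i) = Rsum n (fun i => w i / d i) + (-1) * Rsum n (fun i => 1 / d i)).
    { rewrite <- Rsum_scal, <- Rsum_plus. apply Rsum_ext. intros; unfold a, Rdiv; ring. }
    lra. }
  set (S1 := Rsum n (fun i => 1 / d i)).
  assert (HS1 : 0 < S1).
  { apply Rsum_pos; auto. intros i Hi. unfold Rdiv. rewrite Rmult_1_l. apply Rinv_0_lt_compat, Hd; auto. }
  set (C := c_hat acts pe pb q n xs as_ xi_hat tau_hat).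
  assert (HC : C = S1 / INR n).
  { unfold C, c_hat, En, S1. f_equal. apply Rsum_ext. intros i _. rewrite Hlin. auto. }
  set (p := fun i => / C * w i / d i / INR n).
  assert (Hrep : forall r, beta_emp acts pe pb q n xs as_ xi_hat tau_hat r = Rsum n (fun i => p i * r i)).
  { intros r. unfold beta_emp, En. fold C. unfold Rdiv at 1. rewrite Rmult_comm, <- Rsum_scal.
    apply Rsum_ext. intros i _. rewrite Hlin. unfold p, d, w. unfold Rdiv. ring. }
  assert (Hp : forall i, (i < n)%nat -> 0 <= p i).
  { intros i Hi. unfold p, Rdiv. assert (0 < d i) by auto.
    assert (0 <= w i).
    { unfold w, wgt, Rdiv. apply Rmult_le_pos. apply Hpe. left; apply Rinv_0_lt_compat, Hsupp; auto. }
    assert (0 < / C) by (apply Rinv_0_lt_compat; rewrite HC; apply Rdiv_lt_0_compat; auto).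
    apply Rmult_le_pos; [apply Rmult_le_pos; [apply Rmult_le_pos|]|]; try lra.
    left; apply Rinv_0_lt_compat; auto. left; apply Rinv_0_lt_compat; auto. }
  assert (Hsum : Rsum n p = 1).
  { unfold p. rewrite (Rsum_ext n _ (fun i => (/ C / INR n) * (w i / d i))) by (intros; unfold Rdiv; ring).
    rewrite Rsum_scal, Hw. fold S1. rewrite HC. field. split; lra. }
  split.
  - intros r Hr. rewrite Hrep. split.
    + apply Rsum_nonneg. intros i Hi. apply Rmult_le_pos; [apply Hp|apply Hr]; auto.
    + apply Rle_trans with (Rsum n (fun i => Rmax * p i)).
      apply Rsum_le. intros i Hi. specialize (Hp i Hi). specialize (Hr i Hi). nra.
      rewrite Rsum_scal, Hsum. lra.
  - intros Omega E r sigma2 HE Hr Hind Hv.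
    rewrite (functional_extensionality _ (fun w0 => Rsum n (fun i => p i * r i w0))).
    apply (var_bound E HE n r Rmax Hr Hind p sigma2); auto.
    intros w0. apply Hrep.
Qed.
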